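(* For every $n\geq1$ and every $i\in[n]$, the triple $(G_i([n]),\phi_i([n]),(g_{i,1},\dots,g_{i,n}))$ is an $n$-expansion group.
   Context: $V_{[n]}=\mathbb{F}_2^n$ with basis $e_1,\dots,e_n$. An $n$-expansion group is a triple $(G,\phi,(g_1,\dots,g_n))$: $G$ a group, $\phi:G\to V_{[n]}$ a homomorphism with $\phi(g_j)=e_j$, $g_j^2=1$ for all $j$, $\ker\phi$ an elementary abelian $2$-group, and $[G,G]=\ker\phi$. Let $U_i$ be the $\mathbb{F}_2$-vector space with basis $\{e_A: A\subseteq[n], i\in A\}$, on which $\mathbb{F}_2^{[n]\setminus\{i\}}$ (basis $e_j$, $j\neq i$) acts linearly by $e_j\cdot e_A=e_A+e_{A\cup\{j\}}$ if $j\notin A$ and $e_j\cdot e_A=e_A$ if $j\in A$. $G_i([n])=U_i\rtimes\mathbb{F}_2^{[n]\setminus\{i\}}$, $g_{i,j}=(0,e_j)$ for $j\neq i$, $g_{i,i}=(e_{\{i\}},0)$, and $\phi_i([n]):G_i([n])\to V_{[n]}$ is the natural projection $(u,w)\mapsto w+c(u)e_i$, where $c(u)$ is the coefficient of $e_{\{i\}}$ in $u$; it sends $g_{i,j}$ to $e_j$. *)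

(* Defs.v *)
From HB Require Import structures.
From mathcomp Require Import all_boot all_order all_algebra.
Set Implicit Arguments. Unset Strict Implicit. Unset Printing Implicit Defensive.
Import GRing.Theory.
Local Open Scope ring_scope.

Section Expansion.
Variables (G : Type) (mul : G -> G -> G) (one : G) (inv : G -> G).

Definition is_group : Prop :=
  [/\ forall x y z, mul x (mul y z) = mul (mul x y) z,
      forall x, mul one x = x /\ mul x one = x
    & forall x, mul (inv x) x = one /\ mul x (inv x) = one].

Inductive gen_subgroup (S : G -> Prop) : G -> Prop :=
  | gen_one : gen_subgroup S one
  | gen_in x : S x -> gen_subgroup S x
  | gen_inv x : gen_subgroup S x -> gen_subgroup S (inv x)
  | gen_mul x y : gen_subgroup S x -> gen_subgroup S y -> gen_subgroup S (mul x y).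

Definition commg (x y : G) : G := mul (mul (inv x) (inv y)) (mul x y).

Definition derived (z : G) : Prop :=
  gen_subgroup (fun c => exists x y, c = commg x y) z.

(* V_[n] = F_2^n, basis e_j = delta_mx 0 j *)
Definition is_expansion_group (n : nat) (phi : G -> 'rV['F_2]_n)
    (g : 'I_n -> G) : Prop :=
  is_group /\
  [/\
      forall x y, phi (mul x y) = phi x + phi y,
      forall j, phi (g j) = delta_mx 0 j,
      forall j, mul (g j) (g j) = one,
      forall x y, phi x = 0 -> phi y = 0 -> mul x y = mul y x /\ mul x x = one
    &
      forall x, derived x <-> phi x = 0].

End Expansion.

Section Gi.
Variables (n : nat) (i : 'I_n).

(* index set of the basis of U_i : subsets A of [n] with i \in A *)
Local Notation setsI := {A : {set 'I_n} | i \in A}.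
Local Notation idxW := {j : 'I_n | j != i}.

Local Notation UU := {ffun setsI -> 'F_2}.          (* U_i, coordinates on e_A *)
Local Notation WW := {ffun idxW -> 'F_2}.
Local Notation GG := (UU * WW)%type.                (* G_i([n]) = U_i x| W *)

(* B \ {j}, as an element of setsI (it always contains i when j != i) *)
Definition remj (B : setsI) (j : idxW) : setsI := insubd B (val B :\ val j).

(* action of the basis vector e_j (j != i) on U_i, extended linearly from
   e_j . e_A = e_A + e_{A u {j}} (j \notin A),  e_j . e_A = e_A (j \in A);
   in coordinates: (e_j . u)(B) = u(B) + [j \in B] u(B \ {j}). *)
Definition actj (j : idxW) (u : UU) : UU :=
  [ffun B => u B + (if val j \in val B then u (remj B j) else 0)].

Definition actW (w : WW) (u : UU) : UU :=
  foldr (fun j v => if w j != 0 then actj j v else v) u (enum {: idxW}).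

Definition Gmul (x y : GG) : GG := (x.1 + actW x.2 y.1, x.2 + y.2).
Definition Gone : GG := (0, 0).
Definition Ginv (x : GG) : GG := (- actW (- x.2) x.1, - x.2).

Definition singI : setsI := exist (fun A : {set 'I_n} => i \in A) [set i] (set11 i).

Definition Gphi (x : GG) : 'rV['F_2]_n :=
  \sum_(j : idxW) x.2 j *: delta_mx 0 (val j) + x.1 singI *: delta_mx 0 i.

Definition e_sing : UU := [ffun B => ((val B == [set i]) : nat)%:R].

Definition Ggen (j : 'I_n) : GG :=
  match @insub _ (fun k => k != i) idxW j with
  | Some j' => (0, [ffun k => ((k == j') : nat)%:R])
  | None => (e_sing, 0)
  end.

End Gi.

(* Main.v *)
Require Import Defs.
From mathcomp Require Import all_boot all_order all_algebra.
From mathcomp Require Import ring.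
Import GRing.Theory.
Local Open Scope ring_scope.
Lemma F2_cases (x : 'F_2) : x = 0 \/ x = 1.
Proof. case: x => [[|[|k]]] H; [left|right|]; try by apply: val_inj. by []. Qed.
Lemma F2_add_self (x : 'F_2) : x + x = 0.
Proof. case: (F2_cases x) => ->; first by rewrite addr0. by apply: val_inj. Qed.
Lemma F2_opp (x : 'F_2) : - x = x.
Proof. by apply/eqP; rewrite -subr_eq0 -opprD F2_add_self oppr0. Qed.

Section S.
Variables (n : nat) (i : 'I_n).
Local Notation setsI := {A : {set 'I_n} | i \in A}.
Local Notation idxW := {j : 'I_n | j != i}.
Local Notation UU := {ffun setsI -> 'F_2}.
Local Notation WW := {ffun idxW -> 'F_2}.

Lemma UU_opp (u : UU) : - u = u.
Proof. by apply/ffunP => B; rewrite ffunE F2_opp. Qed.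
Lemma WW_opp (u : WW) : - u = u.
Proof. by apply/ffunP => B; rewrite ffunE F2_opp. Qed.
Lemma UU_self (u : UU) : u + u = 0.
Proof. by apply/ffunP => B; rewrite !ffunE F2_add_self. Qed.
Lemma WW_self (u : WW) : u + u = 0.
Proof. by apply/ffunP => B; rewrite !ffunE F2_add_self. Qed.

Lemma val_remj (B : setsI) (j : idxW) : val (remj B j) = val B :\ val j.
Proof.
rewrite /remj val_insubd in_setD1 (valP B) andbT.
by rewrite eq_sym (valP j).
Qed.

Lemma actjD j (u v : UU) : actj j (u + v) = actj j u + actj j v.
Proof.
apply/ffunP => B; rewrite !ffunE; case: ifP => _; last by rewrite !addr0.
by ring.
Qed.

Lemma actj_invol j (u : UU) : actj j (actj j u) = u.
Proof.
apply/ffunP => B; rewrite !ffunE; case: ifP => H; last by rewrite !addr0.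
by rewrite val_remj setD11 addr0 -addrA F2_add_self addr0.
Qed.

Lemma actj_comm j k (u : UU) : actj j (actj k u) = actj k (actj j u).
Proof.
have [->//|njk] := eqVneq j k.
have njk' : val j != val k by [].
apply/ffunP => B; rewrite !ffunE !val_remj !in_setD1 (negbTE njk') eq_sym (negbTE njk').
have -> : remj (remj B j) k = remj (remj B k) j.
  by apply: val_inj; rewrite !val_remj setDDl setDDl setUC.
case: (val j \in val B); case: (val k \in val B) => /=; ring.
Qed.

Definition Aw (w : WW) (s : seq idxW) (u : UU) : UU :=
  foldr (fun j v => if w j != 0 then actj j v else v) u s.

Lemma actW_Aw w u : actW w u = Aw w (enum {: idxW}) u.
Proof. by []. Qed.

Lemma Aw_comm w s k u : actj k (Aw w s u) = Aw w s (actj k u).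
Proof.
elim: s => [//|j s IH] /=; case: ifP => _ //.
by rewrite actj_comm IH.
Qed.

Lemma Aw_add w w' s u : Aw (w + w') s u = Aw w s (Aw w' s u).
Proof.
elim: s => [//|j s IH] /=; rewrite ffunE.
case: (F2_cases (w j)) => ->; case: (F2_cases (w' j)) => ->;
  rewrite ?addr0 ?add0r ?eqxx ?oner_eq0 /= ?F2_add_self ?eqxx /= IH //.
by rewrite -Aw_comm.
by rewrite -Aw_comm actj_invol.
Qed.

Lemma Aw0 s u : Aw 0 s u = u.
Proof. by elim: s => [//|j s IH] /=; rewrite ffunE eqxx. Qed.

Lemma AwD w s u v : Aw w s (u + v) = Aw w s u + Aw w s v.
Proof. by elim: s => [//|j s IH] /=; case: ifP => _; rewrite ?IH ?actjD. Qed.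

Lemma Aw_0 w s : Aw w s 0 = 0.
Proof.
elim: s => [//|j s IH] /=; case: ifP => _; rewrite IH //.
by apply/ffunP => B; rewrite !ffunE; case: ifP; rewrite ?ffunE addr0.
Qed.


Lemma Aw_sing w s u : Aw w s u (singI i) = u (singI i).
Proof.
elim: s => [//|j s IH] /=; case: ifP => _ //.
by rewrite ffunE IH /= in_set1 (negbTE (valP j)) addr0.
Qed.

Lemma Aw_delta j s u : uniq s ->
  Aw [ffun k => ((k == j) : nat)%:R] s u = if j \in s then actj j u else u.
Proof.
elim: s => [//|k s IH] /= /andP [ks us]; rewrite ffunE in_cons IH //.
have [<-|nkj] := eqVneq k j; first by rewrite oner_eq0 /= (negbTE ks). 
by rewrite eqxx.
Qed.

Local Notation mul := (@Gmul n i).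
Local Notation inv := (@Ginv n i).
Local Notation one := (Gone i).
Local Notation phi := (@Gphi n i).

Lemma Gmul_assoc x y z : mul x (mul y z) = mul (mul x y) z.
Proof.
case: x => [x1 x2]; case: y => [y1 y2]; case: z => [z1 z2].
by rewrite /Gmul /= !actW_Aw AwD Aw_add !addrA.
Qed.

Lemma Gmul1 x : mul one x = x /\ mul x one = x.
Proof.
case: x => [x1 x2]; rewrite /Gmul /Gone /= !actW_Aw Aw0 Aw_0.
by rewrite !add0r !addr0.
Qed.

Lemma Ginv_eq x : inv x = (actW x.2 x.1, x.2).
Proof. by rewrite /Ginv WW_opp UU_opp. Qed.

Lemma GmulV x : mul (inv x) x = one /\ mul x (inv x) = one.
Proof.
case: x => [x1 x2]; rewrite Ginv_eq /Gmul /Gone /= !actW_Aw -!Aw_add.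
by rewrite WW_self Aw0 UU_self UU_self.
Qed.

Lemma Gphi_mul x y : phi (mul x y) = phi x + phi y.
Proof.
case: x => [x1 x2]; case: y => [y1 y2]; rewrite /Gphi /Gmul /=.
rewrite ffunE actW_Aw Aw_sing.
under eq_bigr => j _ do rewrite ffunE scalerDl.
rewrite big_split /= scalerDl; set a := \sum_j _; set b := \sum_j _.
by rewrite addrACA.
Qed.


Lemma Gphi_entry x k : phi x 0 k =
  \sum_j x.2 j * (k == val j)%:R + x.1 (singI i) * (k == i)%:R.
Proof.
rewrite /Gphi mxE summxE; congr (_ + _); [apply: eq_bigr => j _|];
  by rewrite !mxE eqxx.
Qed.

Lemma Gphi_ker x : phi x = 0 <-> x.2 = 0 /\ x.1 (singI i) = 0.
Proof.
split.
  move=> H; split.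
    apply/ffunP => j; move: H => /matrixP /(_ 0 (val j)).
    rewrite Gphi_entry ?mxE (bigD1 j) //= big1 => [|j' nj'].
      by rewrite eqxx mulr1 (negbTE (valP j)) mulr0 !addr0 ffunE.
    by rewrite val_eqE eq_sym (negbTE nj') mulr0.
  move: H => /matrixP /(_ 0 i).
  rewrite Gphi_entry ?mxE big1 => [|j _]; first by rewrite eqxx mulr1 add0r.
  by rewrite eq_sym (negbTE (valP j)) mulr0.
case=> H1 H2; rewrite /Gphi H1 H2 scale0r addr0 big1 // => j _.
by rewrite ffunE scale0r.
Qed.

Lemma row_self (v : 'rV['F_2]_n) : v + v = 0.
Proof. by apply/matrixP => a b; rewrite !mxE F2_add_self. Qed.

Lemma Gphi_inv x : phi (inv x) = phi x.
Proof. by rewrite Ginv_eq /Gphi /= actW_Aw Aw_sing. Qed.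

Local Notation der := (derived mul one inv).

Lemma der_ker x : der x -> phi x = 0.
Proof.
elim => {x}.
- by apply/Gphi_ker; rewrite /= ffunE.
- move=> _ [x [y ->]]; rewrite /commg !Gphi_mul !Gphi_inv.
  by rewrite addrACA !row_self ?addr0.
- by move=> x _; rewrite Gphi_inv.
- by move=> x y _ Hx _ Hy; rewrite Gphi_mul Hx Hy addr0.
Qed.

Lemma mul_ker (u v : UU) : mul (u, 0) (v, 0) = (u + v, 0).
Proof. by rewrite /Gmul actW_Aw /= Aw0 addr0. Qed.

Definition eB (B : setsI) : UU := [ffun B' => ((B' == B) : nat)%:R].


Lemma der_add (u v : UU) : der (u, 0) -> der (v, 0) -> der (u + v, 0).
Proof. by move=> Hu Hv; rewrite -mul_ker; apply: gen_mul. Qed.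

Lemma der_basis B : B != singI i -> der (eB B, 0).
Proof.
move=> nB.
have [k /andP [kB ki]] : exists k, (k \in val B) && (k != i).
  apply/existsP; apply: contraR nB => /existsPn H.
  apply/eqP; apply: val_inj => /=; apply/setP => k; rewrite in_set1.
  have [->|nki] := eqVneq k i; first exact: (valP B).
  by move: (H k); rewrite nki andbT => /negbTE.
pose j : idxW := exist _ k ki.
pose w : WW := [ffun k => ((k == j) : nat)%:R].
pose C := remj B j.
have HC : Defs.commg mul inv (0, w) (eB C, 0) = (eB B, 0).
  rewrite /Defs.commg !Ginv_eq /Gmul /= !actW_Aw Aw_0 Aw0 !addr0 !add0r.
  rewrite -Aw_add WW_self Aw0 Aw_delta ?enum_uniq // mem_enum.
  congr pair; apply/ffunP => B'; rewrite !ffunE.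
  rewrite addrAC F2_add_self add0r.
  have [->|nB'] := eqVneq B' B; first by rewrite kB eqxx.
  case: ifP => // jB'; case: eqP => // /(f_equal val).
  rewrite !val_remj /= => E; case/eqP: nB'; apply: val_inj.
  by rewrite -(setD1K jB') -(setD1K kB) E.
by rewrite -HC; apply: gen_in; eauto.
Qed.

Lemma ker_der x : phi x = 0 -> der x.
Proof.
case/Gphi_ker; case: x => [u w] /= -> Hs.
have -> : u = \sum_(B | B != singI i) [ffun B' => u B * ((B' == B) : nat)%:R].
  apply/ffunP => B'; rewrite sum_ffunE.
  have [->|nB'] := eqVneq B' (singI i).
    by rewrite Hs big1 // => B nB; rewrite ffunE eq_sym (negbTE nB) mulr0.
  rewrite (bigD1 B') //= big1 => [|B /andP [_ nB]].
    by rewrite !ffunE eqxx mulr1 addr0.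
  by rewrite !ffunE eq_sym (negbTE nB) mulr0.
apply: (big_ind (fun v => der (v, 0))).
- exact: gen_one.
- exact: der_add.
- move=> B nB; case: (F2_cases (u B)) => ->.
    have -> : [ffun B' => 0 * ((B' == B) : nat)%:R] = 0 :> UU.
      by apply/ffunP => B'; rewrite !ffunE mul0r.
    exact: gen_one.
  have -> : [ffun B' => 1 * ((B' == B) : nat)%:R] = eB B.
    by apply/ffunP => B'; rewrite !ffunE mul1r.
  exact: der_basis.
Qed.

End S.

Theorem proposition3p11 (n : nat) (hn : (1 <= n)%N) (i : 'I_n) :
  is_expansion_group (@Gmul n i) (Gone i) (@Ginv n i) (@Gphi n i) (@Ggen n i).
Proof.
split; first by split; [exact: Gmul_assoc|exact: Gmul1|exact: GmulV].
split.
- exact: Gphi_mul.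
- move=> j; rewrite /Ggen; case: insubP => [j' Hj Hv|Hj].
  + rewrite /Gphi /= ffunE scale0r addr0 (bigD1 j') //= big1 => [|k nk].
      by rewrite ffunE eqxx scale1r addr0 Hv.
    by rewrite ffunE (negbTE nk) scale0r.
  + rewrite /Gphi /= big1 => [|k _]; last by rewrite ffunE scale0r.
    move: Hj; rewrite negbK => /eqP ->.
    by rewrite add0r ffunE eqxx scale1r.
- move=> j; rewrite /Ggen; case: insubP => [j' Hj Hv|Hj].
  + by rewrite /Gmul actW_Aw /= Aw_0 addr0 WW_self.
  + by rewrite /Gmul actW_Aw /= Aw0 UU_self addr0.
- case=> [u w] [v w'] /Gphi_ker [/= -> _] /Gphi_ker [/= -> _].
  by rewrite !mul_ker addrC UU_self.
- move=> x; split; [exact: der_ker|exact: ker_der].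
Qed.
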